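(* Let $G$ be an $n$-node graph of arboricity at most $a$ ($a\ge1$ an integer), let $k\ge 5a$, and let $C_1,C_2,\dots$ be the layers of the Decomposition procedure with parameters $b=2a$ and $k$. Let $E_1$ be the set of atypical edges. Suppose each node $u$ assigns to each edge of $E_1$ joining $u$ to a higher node a color in $\{1,\dots,2a\}$, distinct edges at $u$ receiving distinct colors (this is possible), and let $F_i\subseteq E_1$ be the set of edges with color $i$. Then for each $i\in\{1,\dots,2a\}$, the graph $G[F_i]$ is a forest in which every node has at most one higher neighbor. Moreover, if $c_i$ is any proper $3$-coloring of the nodes of $G[F_i]$ and $F_{i,j}=\{e\in F_i: c_i(\text{higher endpoint of } e)=j\}$ for $j\in\{1,2,3\}$, then every connected component of $G[F_{i,j}]$ is a star whose center is the highest node of the component.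
   Context: Decomposition procedure with parameters $b,k$ on a graph $G$: set $V_0=V(G)$; for $i=1,2,\dots$: let $C_i$ be the set of nodes $u\in V_{i-1}$ with $\deg_{G[V_{i-1}]}(u)\le k$ such that at most $b$ neighbors of $u$ in $G[V_{i-1}]$ have degree greater than $k$ in $G[V_{i-1}]$; set $V_i=V_{i-1}\setminus C_i$; continue until all nodes are in some layer. Node $u$ is lower than node $v$ (and $v$ higher than $u$) if $u$'s layer index is smaller, or they are in the same layer and $u$ has smaller ID; the higher endpoint of an edge is its higher node. An edge $e=\{u,v\}$ with $u\in C_i$, $v\in C_j$, $i<j$ is atypical if $\deg_{G[V_{i-1}]}(v)>k$; $E_1$ is the set of atypical edges. $G[F]$ denotes the graph with edge set $F$ and vertex set the endpoints of edges in $F$. *)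

(* Defs.v *)
(* Graphs on vertex set 'I_n; the node ID of u is (val u). *)
From mathcomp Require Import all_boot.
From Stdlib Require Import Relations.Relation_Operators.
Set Implicit Arguments. Unset Strict Implicit. Unset Printing Implicit Defensive.

Definition forest (T : finType) (R : T -> T -> Prop) : Prop :=
  forall (m : nat) (c : 'I_m.+3 -> T), injective c ->
    ~ (forall i : 'I_m.+3, R (c i) (c (ordS i))).

Definition arboricity_le n (adj : rel 'I_n) (a : nat) : Prop :=
  exists f : 'I_n -> 'I_n -> 'I_a,
    (forall u v, f u v = f v u) /\
    forall t : 'I_a, forest (fun x y => adj x y /\ f x y = t).

Definition deg_in n (adj : rel 'I_n) (S : {set 'I_n}) (u : 'I_n) : nat :=
  #|[set v in S | adj u v]|.

Definition peel n (adj : rel 'I_n) (b k : nat) (S : {set 'I_n}) : {set 'I_n} :=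
  [set u in S | (deg_in adj S u <= k) &&
     (#|[set v in S | adj u v & k < deg_in adj S v]| <= b)].

Definition Vset n (adj : rel 'I_n) (b k i : nat) : {set 'I_n} :=
  iter i (fun S => S :\: peel adj b k S) [set: 'I_n].

(* C_i (i >= 1); C_0 is empty by convention (layers are indexed from 1) *)
Definition layer n (adj : rel 'I_n) (b k i : nat) : {set 'I_n} :=
  if i is i'.+1 then peel adj b k (Vset adj b k i') else set0.

Definition lower n (adj : rel 'I_n) (b k : nat) (u v : 'I_n) : Prop :=
  exists i j, u \in layer adj b k i /\ v \in layer adj b k j /\
    (i < j \/ (i = j /\ val u < val v)).

Definition atypical n (adj : rel 'I_n) (b k : nat) (u v : 'I_n) : Prop :=
  adj u v /\ exists i j, i < j /\ u \in layer adj b k i /\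
    v \in layer adj b k j /\ k < deg_in adj (Vset adj b k i.-1) v.

(* col u v : color given by u to the edge {u,v} of E_1 going up from u;
   distinct upward E_1-edges at u get distinct colors. *)
Definition good_coloring n (adj : rel 'I_n) (b k : nat) (q : nat)
    (col : 'I_n -> 'I_n -> 'I_q) : Prop :=
  forall u v w, atypical adj b k u v -> atypical adj b k u w ->
    col u v = col u w -> v = w.

(* F_t as a directed relation (lower endpoint first) *)
Definition Fcls n (adj : rel 'I_n) (b k q : nat) (col : 'I_n -> 'I_n -> 'I_q)
    (t : 'I_q) (u v : 'I_n) : Prop :=
  atypical adj b k u v /\ col u v = t.

Definition undirected (T : Type) (R : T -> T -> Prop) (x y : T) : Prop :=
  R x y \/ R y x.

(* Every connected component of the graph (edge relation R, vertices = endpoints)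
   is a star whose center z is the highest node of the component. *)
Definition star_components (T : Type) (R : T -> T -> Prop)
    (low : T -> T -> Prop) : Prop :=
  forall x, (exists y, R x y) ->
    exists z, @clos_refl_trans T R x z /\
      (forall y w, @clos_refl_trans T R x y -> R y w -> y = z \/ w = z) /\
      (forall y, @clos_refl_trans T R x y -> y <> z -> low y z).

(* Main.v *)
Require Import Defs.
From mathcomp Require Import all_boot.
From Stdlib Require Import Relations.Relation_Operators.
From mathcomp Require Import zify.
From Stdlib Require Import ClassicalDescription Relations.Operators_Properties.
Set Implicit Arguments. Unset Strict Implicit. Unset Printing Implicit Defensive.

Lemma ordSS m (p : 'I_m.+3) : ordS (ordS p) <> p.
Proof.
move=> /(congr1 val) /=. have hp := ltn_ord p.
case: (ltnP p.+1 m.+3) => h1.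
- rewrite (modn_small h1).  case: (ltnP p.+2 m.+3) => h2.
  + rewrite (modn_small h2); lia.
  + have -> : p.+2 = m.+3 by lia. rewrite modnn; lia.
- have -> : p.+1 = m.+3 by lia. rewrite modnn modn_small //; lia.
Qed.

Section S.
Variables (n : nat) (adj : rel 'I_n) (b k : nat).

Lemma Vset_S i : Vset adj b k i.+1 = Vset adj b k i :\: peel adj b k (Vset adj b k i).
Proof. by []. Qed.

Lemma Vset_mono i j : i <= j -> Vset adj b k j \subset Vset adj b k i.
Proof.
move=> /subnK <-; elim: (j - i) => [|d IH] /=; first exact: subxx.
 apply: subset_trans IH. exact: subsetDl.
Qed.

Lemma peel_sub S : peel adj b k S \subset S.
Proof. by apply/subsetP=> x; rewrite inE => /andP[]. Qed.

Lemma layer_pos x i : x \in layer adj b k i -> exists i', i = i'.+1.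
Proof. by case: i => [|i']; [rewrite inE | exists i']. Qed.

Lemma layer_V x i : x \in layer adj b k i.+1 -> x \in Vset adj b k i.
Proof. by move=> H; apply: (subsetP (peel_sub _)). Qed.

Lemma layer_notV x i : x \in layer adj b k i.+1 -> x \notin Vset adj b k i.+1.
Proof. move=> H; have H' : x \in peel adj b k (Vset adj b k i) := H. by rewrite Vset_S inE H'. Qed.

Lemma layer_lt x i j : i < j -> x \in layer adj b k i -> x \in layer adj b k j -> False.
Proof.
move=> lt Hi Hj.
have [i' ei] := layer_pos Hi; have [j' ej] := layer_pos Hj; subst i j.
rewrite ltnS in lt.
have := layer_notV Hi; have := layer_V Hj.
by move=> HV; rewrite (subsetP (Vset_mono lt)).
Qed.

Lemma layer_uniq x i j : x \in layer adj b k i -> x \in layer adj b k j -> i = j.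
Proof.
move=> Hi Hj; case: (ltngtP i j) => // lt; exfalso.
- exact: layer_lt lt Hi Hj.
- exact: layer_lt lt Hj Hi.
Qed.

Lemma atyp_not_lower u v : atypical adj b k u v -> lower adj b k v u -> False.
Proof.
move=> [_ [i [j [lt [Hu [Hv _]]]]]] [i' [j' [Hv' [Hu' H]]]].
rewrite (layer_uniq Hv' Hv) (layer_uniq Hu' Hu) in H.
case: H => [h|[h _]]; lia.
Qed.

Lemma atyp_lower u v : atypical adj b k u v -> lower adj b k u v.
Proof.
move=> [_ [i [j [lt [Hu [Hv _]]]]]]; exists i, j; split => //; split => //; by left.
Qed.


Definition atb (u v : 'I_n) : bool :=
  if excluded_middle_informative (atypical adj b k u v) then true else false.

Lemma atbP u v : reflect (atypical adj b k u v) (atb u v).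
Proof. rewrite /atb; case: excluded_middle_informative => h; by constructor. Qed.

Lemma card_up u : #|[set v | atb u v]| <= b.
Proof.
case: (set_0Vmem [set v | atb u v]) => [->|[v0]]; first by rewrite cards0.
rewrite inE => /atbP [_ [i [j [lt [Hu [Hv _]]]]]].
have [i' ei] := layer_pos Hu; subst i.
have Hp : u \in peel adj b k (Vset adj b k i') := Hu.
move: Hp; rewrite inE => /andP [_ /andP [_ Hc]].
apply: leq_trans Hc; apply: subset_leq_card; apply/subsetP => w.
rewrite !inE => /atbP [Haw [i2 [j2 [lt2 [Hu2 [Hw2 Hd]]]]]].
rewrite (layer_uniq Hu2 Hu) /= in Hd lt2.
have [j2' ej] := layer_pos Hw2; subst j2.
rewrite Haw Hd /= andbT.
apply: (subsetP (Vset_mono (_ : i' <= j2'))); [lia | exact: layer_V Hw2].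
Qed.

End S.

Lemma exists_col n (adj : rel 'I_n) k (a : nat) : 1 <= a ->
  exists col : 'I_n -> 'I_n -> 'I_(2*a), good_coloring adj (2*a) k col.
Proof.
move=> a1; have d0 : 0 < 2 * a by lia.
pose d := Ordinal d0.
exists (fun u v => insubd d (index v (enum [set w | atb adj (2*a) k u w]))).
move=> u v w Hv Hw.
set s := enum _.
have Hs : size s <= 2*a by rewrite -cardE card_up.
have mv : v \in s by rewrite mem_enum inE; apply/atbP.
have mw : w \in s by rewrite mem_enum inE; apply/atbP.
have iv : index v s < 2*a by apply: leq_trans Hs; rewrite index_mem.
have iw : index w s < 2*a by apply: leq_trans Hs; rewrite index_mem.
move/(congr1 val); rewrite !val_insubd iv iw => e.
by rewrite -(nth_index v mv) e nth_index.
Qed.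

Lemma forest_F n (adj : rel 'I_n) b k q (col : 'I_n -> 'I_n -> 'I_q) t :
  good_coloring adj b k col -> forest (undirected (Fcls adj b k col t)).
Proof.
move=> gc m c ic H.
have ex : exists l, [exists i, c i \in layer adj b k l].
  case: (H ord0) => [[[_ [i [j [_ [Hi _]]]]] _]|[[_ [i [j [_ [_ [Hj _]]]]]] _]].
  - by exists i; apply/existsP; exists ord0.
  - by exists j; apply/existsP; exists ord0.
pose l0 := ex_minn ex.
have : [exists i, c i \in layer adj b k l0] by rewrite /l0; case: ex_minnP.
move=> /existsP [p Hp].
have minl : forall l i, c i \in layer adj b k l -> l0 <= l.
  move=> l i Hi; rewrite /l0; case: ex_minnP => l1 _; apply; apply/existsP; by exists i.
have up : forall i, undirected (Fcls adj b k col t) (c p) (c i) ->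
                    Fcls adj b k col t (c p) (c i).
  move=> i [//|[[_ [i1 [j1 [lt [Hi [Hj _]]]]]] _]].
  move: (minl _ _ Hi) (layer_uniq Hp Hj); lia.
have h1 := up _ (H p).
have h2 : Fcls adj b k col t (c p) (c (ord_pred p)).
  by apply: up; have := H (ord_pred p); rewrite ord_predK => -[h|h]; [right|left].
case: h1 h2 => a1 e1 [a2 e2].
have := gc _ _ _ a1 a2 (etrans e1 (esym e2)).
move/ic => e; apply: (ordSS (p := p)); by rewrite e ord_predK.
Qed.

Lemma star_F n (adj : rel 'I_n) b k q (col : 'I_n -> 'I_n -> 'I_q) t (c : 'I_n -> 'I_3) j :
  good_coloring adj b k col ->
  (forall x y, undirected (Fcls adj b k col t) x y -> c x <> c y) ->
  star_components
    (undirected (fun u v => Fcls adj b k col t u v /\ c v = j)) (lower adj b k).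
Proof.
move=> gc hc.
set S := (fun u v => Fcls adj b k col t u v /\ c v = j).
have step : forall z y w, c z = j -> (y = z \/ S y z) -> undirected S y w ->
    (w = z \/ S w z) /\ (y = z \/ w = z).
  move=> z y w cz [->|[Fyz cz']] [[Fyw cw]|[Fwy cy]].
  - by case: (hc _ _ (or_introl Fyw)); rewrite cz cw.
  - by split; [right|left].
  - case: Fyz Fyw => a2 e1 [a3 e2].
    have := gc _ _ _ a3 a2 (etrans e2 (esym e1)) => ->; by split; [left|right].
  - by case: (hc _ _ (or_introl Fyz)); rewrite cz cy.
have reach : forall z w, c z = j -> clos_refl_trans _ (undirected S) z w -> w = z \/ S w z.
  move=> z w cz /clos_rt_rtn1_iff; elim => [|y w' Hyw _ IH]; first by left.
  exact: (step z y w' cz IH Hyw).1.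
have conc : forall x z, c z = j -> clos_refl_trans _ (undirected S) x z ->
    clos_refl_trans _ (undirected S) z x ->
    exists z, clos_refl_trans _ (undirected S) x z /\
      (forall y w, clos_refl_trans _ (undirected S) x y -> undirected S y w -> y = z \/ w = z) /\
      (forall y, clos_refl_trans _ (undirected S) x y -> y <> z -> lower adj b k y z).
  move=> x z cz xz zx; exists z; split => //; split.
  - move=> y w xy yw; apply: (step z y w cz _ yw).2.
    apply: reach => //; exact: rt_trans _ _ _ _ _ zx xy.
  - move=> y xy nyz; case: (reach z y cz (rt_trans _ _ _ _ _ zx xy)) => // -[[Fa _] _].
    exact: atyp_lower Fa.
move=> x [y Hy].
case: (boolP (c x == j)) => [/eqP cx|cx].
  by apply: (conc x x cx); apply: rt_refl.
case: Hy => [[Fxy cy]|[_ cx']]; last by rewrite cx' eqxx in cx.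
by apply: (conc x y cy); apply: rt_step; [left|right].
Qed.

Theorem mainTheorem8 (n a k : nat) (adj : rel 'I_n) :
  symmetric adj -> irreflexive adj -> 1 <= a ->
  arboricity_le adj a -> 5 * a <= k ->
  (exists col : 'I_n -> 'I_n -> 'I_(2 * a), good_coloring adj (2 * a) k col) /\
  (forall col : 'I_n -> 'I_n -> 'I_(2 * a), good_coloring adj (2 * a) k col ->
   forall t : 'I_(2 * a),
     forest (undirected (Fcls adj (2 * a) k col t)) /\
     (forall x y z, undirected (Fcls adj (2 * a) k col t) x y ->
        undirected (Fcls adj (2 * a) k col t) x z ->
        lower adj (2 * a) k x y -> lower adj (2 * a) k x z -> y = z) /\
     (forall c : 'I_n -> 'I_3,
        (forall x y, undirected (Fcls adj (2 * a) k col t) x y -> c x <> c y) ->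
        forall j : 'I_3,
          star_components
            (undirected (fun u v => Fcls adj (2 * a) k col t u v /\ c v = j))
            (lower adj (2 * a) k))).
Proof.
move=> _ _ a1 _ _; split; first exact: exists_col.
move=> col gc t; split; first exact: forest_F.
split.
  move=> x y z [hy|hy] [hz|hz] ly lz.
  - case: hy hz => a2 e1 [a3 e2]; exact: gc _ _ _ a2 a3 (etrans e1 (esym e2)).
  - by case: (atyp_not_lower hz.1 lz).
  - by case: (atyp_not_lower hy.1 ly).
  - by case: (atyp_not_lower hy.1 ly).
move=> c hc j; exact: star_F.
Qed.
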